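(* For each finite set $B$, the assignment $M\mapsto M^a=(a_M\circ v_M,\,v_M,\,f_M)$ is a bijection from the set of maps whose corner set is $B$ onto the set of $a$-maps acting on $B$.
   Context: A map is a triple $M=(C_M,v_M,f_M)$ where $C_M$ is a finite cubic graph and $v_M,f_M$ are disjoint perfect matchings whose union is a disjoint union of 4-cycles; $a_M$ is the third perfect matching; the vertices of $C_M$ are the corners, and a map is regarded as determined by its three perfect matchings. Each perfect matching is identified with the fixed-point-free involution of the corners sending $x$ to the other end of the matching edge at $x$. An $a$-map on a finite set $B$ is a triple $(R,\Theta,\Phi)$ of permutations of $B$ with: (am1) $\Theta\Phi=\Phi\Theta$ and $\Theta^2=\Phi^2=\mathrm{id}$; (am2) $x,\Theta x,\Phi x,\Theta\Phi x$ are pairwise distinct for all $x\in B$; (am3) $R\Theta=\Theta R^{-1}$; (am4) $R^n(x)\ne\Theta x$ for all integers $n$ and all $x\in B$. *)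

(* Defs.v *)
From mathcomp Require Import all_boot all_fingroup.
Set Implicit Arguments. Unset Strict Implicit. Unset Printing Implicit Defensive.

Local Open Scope group_scope.

(* A perfect matching on the corner set B is identified with the
   fixed-point-free involution sending x to the other end of its edge. *)
Definition fpf_involution (B : finType) (s : {perm B}) : Prop :=
  forall x, s (s x) = x /\ s x <> x.

(* A map with corner set B, regarded as determined by its three perfect
   matchings (a_M, v_M, f_M), encoded as the triple (a, v, f).
   - a, v, f are perfect matchings (fixed-point-free involutions);
   - v and f are disjoint and v ∪ f is a disjoint union of 4-cycles:
     from every corner x the alternating v,f-walk
        x, v x, f (v x), v (f (v x))
     visits 4 distinct corners and closes up (f (v (f (v x))) = x);
     this also forces v x <> f x (disjointness).
   - a is the third perfect matching (the remaining edges of the cubic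
     graph C_M, whose vertices are the corners). *)
Definition is_map (B : finType) (M : {perm B} * {perm B} * {perm B}) : Prop :=
  let: (a, v, f) := M in
  [/\ fpf_involution a, fpf_involution v, fpf_involution f &
      forall x, f (v (f (v x))) = x /\
        uniq [:: x; v x; f (v x); v (f (v x))]].

Definition is_amap (B : finType) (A : {perm B} * {perm B} * {perm B}) : Prop :=
  let: (R, Th, Ph) := A in
  [/\ (* am1 *) (forall x, Th (Ph x) = Ph (Th x)) /\
                (forall x, Th (Th x) = x) /\ (forall x, Ph (Ph x) = x),
      (* am2 *) (forall x, uniq [:: x; Th x; Ph x; Th (Ph x)]),
      (* am3 *) (forall x, R (Th x) = Th ((R^-1) x)) &
      (* am4 *) (forall (n : nat) x, (R ^+ n) x <> Th x /\ (R ^- n) x <> Th x)].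

(* The composition a_M ∘ v_M as a permutation: x |-> a (v x).
   (In mathcomp, (s * t) x = t (s x).) *)
Definition map_to_amap (B : finType) (M : {perm B} * {perm B} * {perm B})
  : {perm B} * {perm B} * {perm B} :=
  let: (a, v, f) := M in (v * a, v, f).

Lemma map_to_amapE (B : finType) (a v f : {perm B}) x :
  (map_to_amap (a, v, f)).1.1 x = a (v x).
Proof. by rewrite /= permM. Qed.

(* Main.v *)
Require Import Defs.
From mathcomp Require Import all_boot all_fingroup.
Set Implicit Arguments. Unset Strict Implicit. Unset Printing Implicit Defensive.
Local Open Scope group_scope.

Lemma uniq_swap34 (T : eqType) (a b c d : T) :
  uniq [:: a; b; c; d] -> uniq [:: a; b; d; c].
Proof.
move=> H; rewrite -(perm_uniq (_ : perm_eq [:: a; b; c; d] _)) //.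
by rewrite (perm_catl [:: a; b] (_ : perm_eq [:: c; d] [:: d; c])) // (perm_catC [:: c] [:: d]).
Qed.

Lemma am4_pos (B : finType) (R Th a : {perm B}) :
  (forall x, Th (Th x) = x /\ Th x <> x) ->
  (forall x, a (a x) = x /\ a x <> x) ->
  (forall x, R x = a (Th x)) ->
  forall n x, (R ^+ n) x <> Th x.
Proof.
move=> HT Ha HR n; elim: n {-2}n (leqnn n) => [|m IH] n Hn x.
  by rewrite leqn0 in Hn; rewrite (eqP Hn) expg0 perm1 => /esym; apply: (HT x).2.
case: n Hn => [|[|n]] Hn.
- by rewrite expg0 perm1 => /esym; apply: (HT x).2.
- by rewrite expg1 HR; apply: (Ha (Th x)).2.
move=> E.
apply: (IH n _ (R x)); first by apply: leq_trans (leqnSn _) Hn.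
(* R^(n+2) x = Th x => R^n (R x) = Th (R x) *)
move: E; rewrite expgS permM expgSr permM HR => E2.
have E3 : a (a (Th ((R ^+ n) (R x)))) = a (Th x) by rewrite E2.
rewrite (Ha _).1 -HR in E3.
by have := congr1 Th E3; rewrite (HT _).1.
Qed.

Theorem proposition1p1 (B : finType) :
  (forall M : {perm B} * {perm B} * {perm B},
     is_map M -> is_amap (map_to_amap M)) /\
  (forall M1 M2 : {perm B} * {perm B} * {perm B}, is_map M1 -> is_map M2 ->
     map_to_amap M1 = map_to_amap M2 -> M1 = M2) /\
  (forall A : {perm B} * {perm B} * {perm B},
     is_amap A -> exists2 M, is_map M & map_to_amap M = A).
Proof.
split; [|split].
- move=> [[a v] f] [Ha Hv Hf H4] /=.
  have Hvf : forall x, v (f x) = f (v x).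
    move=> x; have [E _] := H4 (v (f x)).
    by rewrite (Hv _).1 (Hf _).1 in E; rewrite E.
  have HR : forall x, (v * a) x = a (v x) by move=> x; rewrite permM.
  have pos := am4_pos Hv Ha HR.
  split.
  + by split; [move=> x; rewrite Hvf | split=> x; [apply: (Hv x).1 | apply: (Hf x).1]].
  + move=> x; have [_ U] := H4 x.
    apply: uniq_swap34.
    by rewrite -Hvf (Hv _).1 in U.
  + move=> x; set y := (v * a)^-1 x.
    have : (v * a) y = x by rewrite permKV.
    by rewrite HR => E; rewrite HR (Hv _).1 -E (Ha _).1.
  + move=> n x; split; first exact: pos.
    move=> E; apply: (pos n (v x)).
    by rewrite (Hv _).1 -E permKV.
- move=> [[a1 v1] f1] [[a2 v2] f2] _ _ /= [E1 E2 E3].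
  by rewrite E2 E3 in E1 *; rewrite (mulgI _ _ _ E1).
- move=> [[R Th] Ph] [[HC [HT HP]] U Hinv H4].
  have HTn : forall x, Th x <> x.
    move=> x E; have := U x; by rewrite /= E inE eqxx.
  have HPn : forall x, Ph x <> x.
    move=> x E; have := U x; by rewrite /= E !inE eqxx !orbT.
  exists (Th * R, Th, Ph).
    split.
    + move=> x; rewrite !permM; split.
        by rewrite Hinv permK HT.
      move=> E; have [_] := H4 1%N x; apply.
      by rewrite expg1 -{1}E permK.
    + by move=> x; split; [apply: HT | apply: HTn].
    + by move=> x; split; [apply: HP | apply: HPn].
    + move=> x; split; first by rewrite -HC HP HT.
      by rewrite -HC HT; apply: uniq_swap34.
  by rewrite /= mulgA (_ : Th * Th = 1) ?mul1g //; apply/permP=> x; rewrite permM HT perm1.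
Qed.
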